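(* Let $\eta_1,\dots,\eta_{d-1}$ satisfy $0<\eta_l<\zeta_l(\mu)$ for all $l$, and put $\eta=\min_{1\le l\le d-1}w_l\eta_l$. Then there is a constant $C>0$ such that for all $1\le l\le d-1$, $r\in\Xi$, $t>1$ and every nonzero decomposable $v=v_1\wedge\dots\wedge v_l\in V_l$, $$\int_{M_{m\times n}(\mathbb R)}\|g_tu(x)v\|^{-\eta_l}\,d\mu^{(r)}(x)\le C\,t^{-\eta}\|v\|^{-\eta_l}.$$
   Context: Let $m,n\ge1$, $d=m+n$, $a_1\ge\dots\ge a_m>0$, $b_1\ge\dots\ge b_n>0$, $\sum a_i=\sum b_j=1$. For $t>0$, $g_t=\mathrm{diag}(t^{a_1},\dots,t^{a_m},t^{-b_1},\dots,t^{-b_n})$; $u(\theta)=\begin{pmatrix}I_m&\theta\\0&I_n\end{pmatrix}$. For $1\le l\le d-1$, $w_l=a_m+\dots+a_{m+1-l}$ if $l\le m$ and $w_l=1-(b_1+\dots+b_{l-m})$ if $l>m$. $V_l=\bigwedge^l\mathbb R^d$ with $g$ acting by $\wedge^lg$; with $e_I=e_{i_1}\wedge\dots\wedge e_{i_l}$, write $v=\sum v_Ie_I$, $\|v\|=\max_I|v_I|$. $V_l^+=\mathrm{span}\{e_I:\#(I\cap\{1,\dots,m\})=\min\{l,m\}\}$, $\pi_{l+}$ the projection onto $V_l^+$ along the span of the other $e_I$. For each $i,j$, $\Phi_{ij}$ is a finite IFS on $\mathbb R$ of maps $x\mapsto c_{ij}x+w_{ij,e}$ with common ratio $c_{ij}\in(0,1)$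 satisfying the open set condition, with limit set $\mathcal K_{ij}$ of dimension $s_{ij}>0$; $\mu_{ij}$ is the normalised $s_{ij}$-dimensional Hausdorff measure on $\mathcal K_{ij}$, $\mu=\bigotimes\mu_{ij}$; $\Xi=\{r\in M_{m\times n}(\mathbb R):r_{ij}\in[c_{ij},c_{ij}^{-1}]\}$ and $\mu^{(r)}=\bigotimes\mu^{(r)}_{ij}$ with $\mu^{(r)}_{ij}$ the pushforward of $\mu_{ij}$ by $x\mapsto r_{ij}x$. The critical exponent $\zeta_l(\mu)$ is the supremum of $\gamma\ge0$ such that for some $C>0$, $\int\|\pi_{l+}(u(\theta)v)\|^{-\gamma}d\mu^{(r)}(\theta)<C$ for all decomposable $v\in V_l$ with $\|v\|=1$ and all $r\in\Xi$. *)

(* Defs.v *)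
From HB Require Import structures.
From mathcomp Require Import all_boot all_order all_algebra.
From mathcomp Require Import all_classical all_reals all_analysis.

Set Implicit Arguments.
Unset Strict Implicit.
Unset Printing Implicit Defensive.

Import Order.TTheory GRing.Theory Num.Theory.
Import numFieldNormedType.Exports.
Local Open Scope classical_set_scope.
Local Open Scope ring_scope.

Section IFS.
Variable R : realType.

Definition simil (c w : R) : R -> R := fun x => c * x + w.

Definition OSC (N : nat) (c : R) (w : 'I_N -> R) : Prop :=
  exists V : set R, [/\ open V, V !=set0,
    (forall e, simil c (w e) @` V `<=` V) &
    (forall e e', e != e' -> (simil c (w e) @` V) `&` (simil c (w e') @` V) = set0)].

(* K is the limit set (attractor) of the IFS: the nonempty compact set
   invariant under the Hutchinson operator (unique by Hutchinson). *)
Definition limit_set (N : nat) (c : R) (w : 'I_N -> R) (K : set R) : Prop :=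
  [/\ compact K, K !=set0 & K = \bigcup_(e in [set: 'I_N]) (simil c (w e) @` K)].

Local Open Scope ereal_scope.

Definition ediam (U : set R) : \bar R :=
  ereal_sup [set (`|(x - y)%R|)%:E | x in U & y in U].

Definition dpow (s : R) (U : set R) : \bar R :=
  if U == set0 then 0 else ediam U `^ s.

Definition hausdorff_delta (s delta : R) (A : set R) : \bar R :=
  ereal_inf [set \sum_(0 <= k <oo) dpow s (U k) |
    U in [set U : nat -> set R |
      A `<=` \bigcup_k U k /\ forall k, ediam (U k) <= delta%:E]].

Definition hausdorff (s : R) (A : set R) : \bar R :=
  ereal_sup [set hausdorff_delta s delta A | delta in [set delta : R | (0 < delta)%R]].

Definition hdim (A : set R) : \bar R :=
  ereal_inf [set s%:E | s in [set s : R | (0 <= s)%R /\ hausdorff s A = 0]].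

Definition normalised_hausdorff (s : R) (K : set R) (mu : set R -> \bar R) : Prop :=
  forall A : set R, measurable A -> mu A = hausdorff s (A `&` K) * (hausdorff s K)^-1.

End IFS.

Definition Mat (R : realType) (m n : nat) := 'M[R]_(m, n).
HB.instance Definition _ (R : realType) m n := isPointed.Build (Mat R m n) 0.

Definition rects (R : realType) (m n : nat) : set (set (Mat R m n)) :=
  [set [set x : Mat R m n | forall i j, A i j (x i j)] |
     A in [set A : 'I_m -> 'I_n -> set R | forall i j, measurable (A i j)]].

Definition MatM (R : realType) (m n : nat) := g_sigma_algebraType (@rects R m n).

Definition is_product_measure (R : realType) (m n : nat)
  (nu : 'I_m -> 'I_n -> set R -> \bar R) (P : set (MatM R m n) -> \bar R) : Prop :=
  forall A : 'I_m -> 'I_n -> set R, (forall i j, measurable (A i j)) ->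
    P [set x : MatM R m n | forall i j, A i j (x i j)] =
      (\prod_(i < m) \prod_(j < n) nu i j (A i j))%E.

Section Exterior.
Variable R : realType.

(* e_I with I = {s 0 < s 1 < ... < s (l-1)} is indexed by increasing s *)
Definition incr (l d : nat) (s : {ffun 'I_l -> 'I_d}) : bool :=
  [forall i : 'I_l, forall j : 'I_l, (i < j)%N ==> (s i < s j)%N].

(* an element of V_l, given by its coordinates v_I (only increasing s matter) *)
Definition Vl (d l : nat) := {ffun 'I_l -> 'I_d} -> R.

(* coordinates of v_1 /\ ... /\ v_l, where v_k is the k-th column of A *)
Definition wedge (d l : nat) (A : 'M[R]_(d, l)) : Vl d l :=
  fun s => \det (\matrix_(i < l, j < l) A (s i) j).

Definition ext_act (d l : nat) (g : 'M[R]_d) (v : Vl d l) : Vl d l :=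
  fun s => \sum_(s' : {ffun 'I_l -> 'I_d} | incr s')
             \det (\matrix_(i < l, j < l) g (s i) (s' j)) * v s'.

Definition decomposable (d l : nat) (v : Vl d l) : Prop :=
  exists A : 'M[R]_(d, l), forall s, incr s -> v s = wedge A s.

Definition vnonzero (d l : nat) (v : Vl d l) : Prop :=
  exists s, incr s /\ v s != 0.

Definition vnorm (d l : nat) (v : Vl d l) : R :=
  \big[Num.max/0]_(s : {ffun 'I_l -> 'I_d} | incr s) `|v s|.

Definition proj_plus (m n l : nat) (v : Vl (m + n) l) : Vl (m + n) l :=
  fun s => if #|[set k : 'I_l | (s k < m)%N]| == minn l m then v s else 0.

End Exterior.

Section Flow.
Variables (R : realType) (m n : nat).

Definition gt (a : 'I_m -> R) (b : 'I_n -> R) (t : R) : 'M[R]_(m + n) :=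
  diag_mx (\row_k match fintype.split k with
                  | inl i => t `^ (a i)
                  | inr j => t `^ (- b j) end).

Definition uu (theta : 'M[R]_(m, n)) : 'M[R]_(m + n) :=
  block_mx 1%:M theta 0 1%:M.

Definition weight (a : 'I_m -> R) (b : 'I_n -> R) (l : nat) : R :=
  if (l <= m)%N then \sum_(i < m | (m - l <= i)%N) a i
  else 1 - \sum_(j < n | (j < l - m)%N) b j.

Definition negpow (x gamma : R) : \bar R :=
  if x == 0 then (if gamma == 0 then 1%E else +oo%E) else (x `^ (- gamma))%:E.

Definition Xi (c : 'I_m -> 'I_n -> R) : set 'M[R]_(m, n) :=
  [set r | forall i j, c i j <= r i j <= (c i j)^-1].

(* critical exponent zeta_l(mu); P r is the product measure mu^(r) *)
Definition crit_exp (c : 'I_m -> 'I_n -> R)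
  (P : 'M[R]_(m, n) -> set (MatM R m n) -> \bar R) (l : nat) : \bar R :=
  ereal_sup [set gamma%:E | gamma in [set gamma : R | 0 <= gamma /\
    exists C : R, 0 < C /\
      forall r, Xi c r -> forall v : Vl R (m + n) l, decomposable v -> vnorm v = 1 ->
        (\int[P r]_(theta in setT)
           negpow (vnorm (proj_plus (ext_act (uu theta) v))) gamma < C%:E)%E]].

End Flow.

(* Main.v *)
Require Import Defs.
From HB Require Import structures.
From mathcomp Require Import all_boot all_order all_algebra.
From mathcomp Require Import all_classical all_reals all_analysis.
From mathcomp Require Import lra zify.
Import Order.TTheory GRing.Theory Num.Theory.
Import numFieldNormedType.Exports.
Local Open Scope classical_set_scope.
Local Open Scope ring_scope.
Set Implicit Arguments.
Unset Strict Implicit.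
Unset Printing Implicit Defensive.

Import HBNNSimple measurable_realfun.
Section IntLemmas.
Context d (T : measurableType d) (R : realType).
Local Open Scope ereal_scope.

Lemma int_mono (mu : {measure set T -> \bar R}) (f g : T -> \bar R) :
  (forall x, 0 <= f x) -> (forall x, f x <= g x) ->
  \int[mu]_x f x <= \int[mu]_x g x.
Proof.
move=> f0 fg.
have g0 x : 0 <= g x by apply: le_trans (f0 x) (fg x).
rewrite !ge0_integralTE //.
apply: ereal_sup_le => _ [h hf <-]; exists h => //= x.
exact: le_trans (hf x) (fg x).
Qed.

Lemma int_key (mu : probability T R) (F G : T -> \bar R) (k : R) :
  (0 < k)%R -> (forall x, 0 <= F x) -> (forall x, 0 <= G x) ->
  (forall x, F x <= k%:E * (1 + G x)) ->
  \int[mu]_x F x <= k%:E * (1 + \int[mu]_x G x).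
Proof.
move=> k0 F0 G0 FG.
rewrite ge0_integralTE //.
apply: ge_ereal_sup => _ [h hF <-] /=.
rewrite -integralT_nnsfun.
pose h2 := fun x => Num.max (h x / k - 1)%R 0%R.
have mh : measurable_fun setT (fun x => h x) by apply: measurable_funPT.
have mh2 : measurable_fun setT h2.
  apply: measurable_maxr; last exact: measurable_cst.
  apply: measurable_funB; last exact: measurable_cst.
  by apply: measurable_funM => //; exact: measurable_cst.
have h20 x : (0 <= h2 x)%R by rewrite /h2 le_max lexx orbT.
have mh2E : measurable_fun setT (fun x => (h2 x)%:E) by apply/measurable_EFinP.
have m1h2 : measurable_fun setT (fun x => 1 + (h2 x)%:E).
  by apply: emeasurable_funD => //; exact: measurable_cst.
apply: (@le_trans _ _ (\int[mu]_x (k%:E * (1 + (h2 x)%:E)))).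
  apply: ge0_le_integral => //.
  - by move=> x _; rewrite lee_fin.
  - by apply/measurable_EFinP.
  - by apply: emeasurable_funM => //; exact: measurable_cst.
  - move=> x _; rewrite -EFinD -EFinM lee_fin.
    rewrite -ler_pdivrMl // [X in (_ <= X)%R]addrC -lerBlDr /h2.
    by rewrite mulrC le_max lexx.
have h2p x : [set: T] x -> 0 <= 1 + (h2 x)%:E.
  by move=> _; apply: adde_ge0 => //; rewrite lee_fin.
rewrite (ge0_integralZl_EFin mu measurableT h2p m1h2 (ltW k0)).
rewrite lee_pmul2l ?lte_fin //.
have h2q x : [set: T] x -> 0 <= (h2 x)%:E by move=> _; rewrite lee_fin.
have c1 x : [set: T] x -> 0 <= (1 : \bar R) by [].
rewrite (ge0_integralD mu measurableT c1 (measurable_cst _) h2q mh2E).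
rewrite integral_cst //.
set M := (X in 1 * X + _); have -> : M = 1 by exact: probability_setT.
rewrite mul1e leeD2l //.
apply: int_mono => [x|x]; first by rewrite lee_fin.
rewrite /h2; have [hk|hk] := leP (h x / k - 1)%R 0%R.
  exact: G0.
have := le_trans (hF x) (FG x).
move: (G0 x); case: (G x) => [g| |] G0x.
2: by move=> _; rewrite leey.
2: by rewrite leeNy_eq in G0x.
move=> hle0; have hle : (h x <= k * (1 + g))%R by rewrite -lee_fin EFinM EFinD.
rewrite lee_fin lerBlDl ler_pdivrMr //; nra.

Qed.

End IntLemmas.

Lemma swap_sum (R : realType) N (f : 'I_N -> R) (S T : {set 'I_N}) (al : R) :
  #|S| = #|T| -> (forall k, k \in S :\: T -> al <= f k) ->
  (forall k, k \in T :\: S -> f k <= al) ->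
  \sum_(k in T) f k <= \sum_(k in S) f k.
Proof.
move=> cST hS hT.
rewrite (big_setID S) [X in _ <= X](big_setID T) /= finset.setIC lerD2l.
have cc : #|T :\: S| = #|S :\: T|.
  have e1 : (#|T :&: S| + #|T :\: S|)%N = #|T| := cardsID _ _.
  have e2 : (#|S :&: T| + #|S :\: T|)%N = #|S| := cardsID _ _.
  rewrite finset.setIC in e1.
  by apply/eqP; rewrite -(eqn_add2l #|S :&: T|) e1 e2 cST.
apply: (@le_trans _ _ (\sum_(k in T :\: S) al)); first by apply: ler_sum.
rewrite sumr_const cc -sumr_const; by apply: ler_sum.
Qed.

Lemma cnt_lt (R : realType) N q : (q <= N)%N ->
  \sum_(i < N | (i < q)%N) (1:R) = q%:R.
Proof.
elim: N q => [|N IH] q hq.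
  by rewrite big_ord0; move: hq; rewrite leqn0 => /eqP ->.
rewrite big_mkcond big_ord_recr /= -big_mkcond.
move: hq; rewrite leq_eqVlt => /orP[/eqP ->|hq].
  rewrite ltnSn.
  rewrite (eq_bigl (fun i : 'I_N => (i < N)%N)); last first.
    by move=> i; rewrite (ltn_ord i) ltnS (ltnW (ltn_ord i)).
  by rewrite IH // -natr1.
rewrite ltnS in hq; rewrite ltnNge hq /= addr0; rewrite -(IH q hq).
by apply: eq_bigl.
Qed.

Lemma cnt_ge (R : realType) N p : (p <= N)%N ->
  \sum_(i < N | (p <= i)%N) (1:R) = (N - p)%:R.
Proof.
move=> hp.
have e : \sum_(i < N) (1:R) = \sum_(i < N | (i < p)%N) (1:R) + \sum_(i < N | ~~ (i < p)%N) (1:R).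
  exact: bigID.
rewrite sumr_const card_ord cnt_lt // in e.
rewrite natrB // e addrC addKr.
by apply: eq_bigl => i; rewrite -leqNgt.
Qed.

Section Comb.
Variables (R : realType) (m n : nat) (a : 'I_m -> R) (b : 'I_n -> R).
Hypothesis a_dec : forall i i' : 'I_m, (i <= i')%N -> a i' <= a i.
Hypothesis b_dec : forall j j' : 'I_n, (j <= j')%N -> b j' <= b j.
Hypothesis a_sum : \sum_(i < m) a i = 1.

Definition ex (k : 'I_(m + n)) : R :=
  match fintype.split k with inl i => a i | inr j => - b j end.

Lemma ex_l i : ex (lshift n i) = a i.
Proof.
rewrite /ex; case: (splitP (lshift n i)) => [j /= E|j /= E].
  by congr a; apply: val_inj; rewrite /= -E.
by move: (ltn_ord i); rewrite E ltnNge leq_addr.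
Qed.

Lemma ex_r j : ex (rshift m j) = - b j.
Proof.
rewrite /ex; case: (splitP (rshift m j)) => [i /= E|i /= E].
  by move: (ltn_ord i); rewrite -E ltnNge leq_addr.
by congr (- b _); apply: val_inj; move/eqP: E; rewrite /= eqn_add2l => /eqP.
Qed.

Lemma ord_case (k : 'I_(m + n)) :
  (exists i : 'I_m, k = lshift n i) \/ (exists j : 'I_n, k = rshift m j).
Proof.
case: (splitP k) => [i E|j E]; [left; exists i|right; exists j]; exact: val_inj.
Qed.

Local Open Scope set_scope.

Lemma comb l (s : {ffun 'I_l -> 'I_(m + n)}) :
  (1 <= l)%N -> (l <= m + n - 1)%N -> incr s ->
  #|[set k : 'I_l | (s k < m)%N]| == minn l m ->
  weight a b l <= \sum_(i < l) ex (s i).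
Proof.
move=> l1 lmn si hc.
have H (i j : 'I_l) : (i < j)%N -> (s i < s j)%N.
  by move=> h; move/forallP: si => /(_ i) /forallP /(_ j) /implyP; apply.
have sinj : injective s.
  move=> i j e; case: (ltngtP i j) => [h|h|/val_inj //].
    by have := H _ _ h; rewrite e ltnn.
  by have := H _ _ h; rewrite e ltnn.
pose S := [set s i | i in 'I_l].
have sumS : \sum_(i < l) ex (s i) = \sum_(k in S) ex k.
  by rewrite big_imset //= => i j _ _; apply: sinj.
have cardS : #|S| = l by rewrite card_imset // card_ord.
have inS k : k \in S -> exists i, k = s i by move=> /imsetP [i _ ->]; exists i.
case: (leqP l m) => hl.
- have allm k : (s k < m)%N.
    have : [set k : 'I_l | (s k < m)%N] = finset.setT.
      apply/eqP; rewrite eqEcard finset.subsetT cardsT card_ord (eqP hc).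
      by rewrite (minn_idPl hl) leqnn.
    by move=> /setP /(_ k); rewrite !inE.
  pose T := [set k : 'I_(m + n) | (m - l <= k < m)%N].
  have sumT : \sum_(k in T) ex k = weight a b l.
    rewrite /weight hl big_split_ord /=.
    rewrite [X in _ + X]big1 ?addr0; last by move=> j; rewrite inE /=; lia.
    apply: eq_big => [i|i _]; last by rewrite ex_l.
    by rewrite inE /= (ltn_ord i) andbT.
  have cardT : #|T| = l.
    have : \sum_(k in T) (1:R) = l%:R.
      rewrite big_split_ord /=.
      rewrite [X in _ + X]big1 ?addr0; last by move=> j; rewrite inE /=; lia.
      rewrite (eq_bigl (fun i : 'I_m => (m - l <= i)%N)); last first.
        by move=> i; rewrite inE /= (ltn_ord i) andbT.
      rewrite cnt_ge ?leq_subr //; congr (_%:R); lia.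
    by rewrite sumr_const => /eqP; rewrite eqr_nat => /eqP.
  have hml : (m - l < m)%N by lia.
  rewrite -sumT sumS; apply: (@swap_sum R _ _ _ _ (a (Ordinal hml))).
  + by rewrite cardS cardT.
  + move=> k; rewrite !inE => /andP [kT /inS [i ki]].
    have := allm i; rewrite -ki => km.
    have [[i' ki']|[j' kj']] := ord_case k; last by move: km; rewrite kj' /=; lia.
    rewrite ki' ex_l; apply: a_dec => /=.
    by move: kT km; rewrite ki' /= negb_and; lia.
  + move=> k; rewrite !inE => /andP [_ /andP [k1 k2]].
    have [[i' ki']|[j' kj']] := ord_case k; last by move: k2; rewrite kj' /=; lia.
    rewrite ki' ex_l; apply: a_dec => /=.
    by move: k1; rewrite ki'.
- pose T := [set k : 'I_(m + n) | (k < l)%N].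
  have sumT : \sum_(k in T) ex k = weight a b l.
    rewrite /weight leqNgt hl /= big_split_ord /=.
    rewrite (eq_big predT (fun i => a i)); first last.
    + by move=> i _; rewrite ex_l.
    + by move=> i; rewrite inE /=; apply: (@ltn_trans m) => //.
    rewrite a_sum (eq_big (fun j : 'I_n => (j < l - m)%N) (fun j => - b j)).
    + by rewrite sumrN.
    + by move=> j; rewrite inE /=; lia.
    + by move=> j _; rewrite ex_r.
  have cardT : #|T| = l.
    have : \sum_(k in T) (1:R) = l%:R.
      rewrite big_split_ord /=.
      rewrite (eq_bigl predT); last first.
        by move=> i; rewrite inE /=; apply: (@ltn_trans m) => //.
      rewrite (eq_bigl (fun j : 'I_n => (j < l - m)%N)); last first.
        by move=> j; rewrite inE /=; lia.
      rewrite cnt_lt; last by lia.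
      rewrite sumr_const card_ord -natrD; congr (_%:R); lia.
    by rewrite sumr_const => /eqP; rewrite eqr_nat => /eqP.
  pose A := [set k : 'I_(m + n) | (k < m)%N].
  have cardA : #|A| = m.
    have : \sum_(k in A) (1:R) = m%:R.
      rewrite big_split_ord /=.
      rewrite [X in _ + X]big1 ?addr0; last by move=> j; rewrite inE /=; lia.
      rewrite (eq_bigl predT); last by move=> i; rewrite inE /= (ltn_ord i).
      by rewrite sumr_const card_ord.
    by rewrite sumr_const => /eqP; rewrite eqr_nat => /eqP.
  have AS (k : 'I_(m + n)) : (k < m)%N -> k \in S.
    move=> km.
    pose B := [set i : 'I_l | (s i < m)%N].
    have : A == s @: B.
      rewrite eq_sym eqEcard card_imset // cardA (eqP hc) (minn_idPr (ltnW hl)) leqnn andbT.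
      by apply/fintype.subsetP => x /imsetP [i]; rewrite !inE => ? ->.
    move=> /eqP AB; have : k \in A by rewrite inE.
    rewrite AB => /imsetP [i _ ->]; exact: imset_f.
  have hlm : (l - m < n)%N by lia.
  rewrite -sumT sumS; apply: (@swap_sum R _ _ _ _ (- b (Ordinal hlm))).
  + by rewrite cardS cardT.
  + move=> k; rewrite !inE -leqNgt => /andP [kT _].
    have [[i' ki']|[j' kj']] := ord_case k; first by move: kT (ltn_ord i'); rewrite ki' /=; lia.
    rewrite kj' ex_r lerN2; apply: b_dec => /=.
    by move: kT; rewrite kj' /=; lia.
  + move=> k; rewrite !inE => /andP [kS kT].
    have [[i' ki']|[j' kj']] := ord_case k.
      by move: kS; rewrite (AS k) // ki' /=.
    rewrite kj' ex_r lerN2; apply: b_dec => /=.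
    by move: kT; rewrite kj' /=; lia.
Qed.

End Comb.

Section Alg.
Context {R : realType}.

Lemma vnorm_ge0 d l (v : Vl R d l) : 0 <= vnorm v.
Proof. by rewrite /vnorm; elim/big_ind: _ => // x y hx hy; rewrite le_max hx. Qed.

Lemma le_vnorm d l (v : Vl R d l) s : incr s -> `|v s| <= vnorm v.
Proof. by move=> hs; rewrite /vnorm; apply: le_bigmax_cond. Qed.

Lemma vnorm_le d l (v : Vl R d l) c : 0 <= c ->
  (forall s, incr s -> `|v s| <= c) -> vnorm v <= c.
Proof. by move=> c0 h; rewrite /vnorm; apply: bigmax_le. Qed.

Lemma ext_act_diag d l (dg : 'rV[R]_d) (U : 'M[R]_d) (v : Vl R d l) s :
  ext_act (diag_mx dg *m U) v s = (\prod_(i < l) dg 0 (s i)) * ext_act U v s.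
Proof.
rewrite /ext_act mulr_sumr; apply: eq_bigr => s' _; rewrite mulrA; congr (_ * _).
have -> : \matrix_(i < l, j < l) (diag_mx dg *m U) (s i) (s' j) =
   diag_mx (\row_i dg 0 (s i)) *m \matrix_(i < l, j < l) U (s i) (s' j).
  by apply/matrixP => i j; rewrite !mul_diag_mx !mxE.
by rewrite det_mulmx det_diag; congr (_ * _); apply: eq_bigr => i _; rewrite mxE.
Qed.

Lemma ext_act_scale d l (U : 'M[R]_d) (v : Vl R d l) (c : R) s :
  ext_act U (fun s => v s * c) s = ext_act U v s * c.
Proof. by rewrite /ext_act mulr_suml; apply: eq_bigr => s' _; rewrite mulrA. Qed.

Lemma powR_sum l (t : R) (f : 'I_l -> R) : 0 < t ->
  \prod_(i < l) t `^ f i = t `^ (\sum_(i < l) f i).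
Proof.
move=> t0; elim/big_rec2: _ => [|i x y _ ->]; first by rewrite powRr0.
rewrite powRD //; apply/implyP => _; by rewrite gt_eqF.
Qed.

Lemma decomp_scale d l (v : Vl R d l) (c : R) : (1 <= l)%N ->
  decomposable v -> decomposable (fun s => v s * c).
Proof.
case: l v => // l v _ [A hA].
exists (A *m diag_mx (\row_(j < l.+1) if (j == ord0) then c else 1)).
move=> s hs; rewrite hA // /wedge.
have -> : \matrix_(i < l.+1, j < l.+1)
     (A *m diag_mx (\row_(j < l.+1) if j == ord0 then c else 1)) (s i) j =
   \matrix_(i < l.+1, j < l.+1) A (s i) j *m
     diag_mx (\row_(j < l.+1) if j == ord0 then c else 1).
  by apply/matrixP => i j; rewrite !mul_mx_diag !mxE.
rewrite det_mulmx det_diag big_ord_recl !mxE eqxx big1 ?mulr1 //.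
by move=> i _; rewrite mxE.
Qed.

Lemma negpow_ge0 (x g : R) : (0 <= negpow x g)%E.
Proof.
rewrite /negpow; case: (x == 0) => //; last by rewrite lee_fin powR_ge0.
by case: (g == 0).
Qed.

Lemma negpow0 (g : R) : 0 < g -> negpow 0 g = +oo%E.
Proof. by move=> g0; rewrite /negpow eqxx gt_eqF. Qed.

Lemma negpowE (x g : R) : x != 0 -> negpow x g = (x `^ (- g))%:E.
Proof. by move=> x0; rewrite /negpow (negbTE x0). Qed.

Lemma negpow_bound (Y y k0 e g : R) : 0 < k0 -> 0 <= y -> k0 * y <= Y ->
  0 < e -> e <= g ->
  (negpow Y e <= (k0 `^ (- e))%:E * (1 + negpow y g))%E.
Proof.
move=> k00 y0 hY e0 eg.
have g0 : 0 < g by apply: lt_le_trans eg.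
have [y00|yn0] := eqVneq y 0.
  rewrite y00 negpow0 // addey // gt0_muley ?lte_fin ?powR_gt0 //.
  by rewrite leey.
have yp : 0 < y by rewrite lt_neqAle eq_sym yn0.
have Yp : 0 < Y by apply: lt_le_trans hY; rewrite mulr_gt0.
rewrite negpowE ?gt_eqF // negpowE // -EFinD -EFinM lee_fin.
have h1 : Y `^ (- e) <= (k0 * y) `^ (- e).
  rewrite !powRN lef_pV2 ?posrE ?powR_gt0 ?mulr_gt0 //.
  by apply: ge0_ler_powR => //; [exact: ltW|rewrite nnegrE mulr_ge0 // ltW|rewrite nnegrE ltW].
apply: (le_trans h1).
rewrite (powRM _ (ltW k00) y0) ler_pM2l ?powR_gt0 //.
have [y1|y1] := leP 1 y.
  apply: (@le_trans _ _ 1); last by rewrite lerDl powR_ge0.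
  rewrite powRN invr_le1 ?unitfE ?gt_eqF ?powR_gt0 //.
  by rewrite -[X in X <= _](powRr0 y); apply: ler_powR => //; exact: ltW.
apply: (@le_trans _ _ (y `^ (- g))); last by rewrite lerDr.
apply: ger_powR; first by rewrite yp ltW.
by rewrite lerN2.
Qed.

End Alg.

Lemma card_bridge l N (s : {ffun 'I_l -> 'I_N}) m :
  #|[set k : 'I_l | (s k < m)%N]| = #|[set k : 'I_l | (s k < m)%N]%SET|.
Proof.
apply: eq_card => k; rewrite inE.
apply/idP/idP; first by rewrite in_setE.
by move=> h; rewrite in_setE.
Qed.

Lemma gt_row (R : realType) m n (a : 'I_m -> R) (b : 'I_n -> R) t k :
  (\row_k match fintype.split k with
          | inl i => t `^ (a i)
          | inr j => t `^ (- b j) end : 'rV[R]_(m + n)) 0 k = t `^ (@ex R m n a b k).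
Proof. by rewrite mxE /ex; case: (fintype.split k). Qed.

Theorem proposition5p1
  (R : realType) (m n : nat) (hm : (0 < m)%N) (hn : (0 < n)%N)
  (a : 'I_m -> R) (b : 'I_n -> R)
  (a_pos : forall i, 0 < a i) (b_pos : forall j, 0 < b j)
  (a_dec : forall i i' : 'I_m, (i <= i')%N -> a i' <= a i)
  (b_dec : forall j j' : 'I_n, (j <= j')%N -> b j' <= b j)
  (a_sum : \sum_(i < m) a i = 1) (b_sum : \sum_(j < n) b j = 1)
  (* the IFS Phi_ij = { x |-> c_ij x + w_ij e : e < N_ij } *)
  (N : 'I_m -> 'I_n -> nat) (c : 'I_m -> 'I_n -> R)
  (w : forall i j, 'I_(N i j) -> R)
  (c_pos : forall i j, 0 < c i j) (c_lt1 : forall i j, c i j < 1)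
  (osc : forall i j, OSC (c i j) (w i j))
  (K : 'I_m -> 'I_n -> set R)
  (K_lim : forall i j, limit_set (c i j) (w i j) (K i j))
  (s : 'I_m -> 'I_n -> R)
  (s_dim : forall i j, hdim (K i j) = (s i j)%:E)
  (s_pos : forall i j, 0 < s i j)
  (mu : 'I_m -> 'I_n -> probability R R)
  (mu_haus : forall i j, normalised_hausdorff (s i j) (K i j) (mu i j))
  (* P r is the product measure mu^(r) = \bigotimes_ij (x |-> r_ij x)_* mu_ij *)
  (P : 'M[R]_(m, n) -> probability (MatM R m n) R)
  (P_prod : forall r : 'M[R]_(m, n), is_product_measure
       (fun i j => pushforward (mu i j) (fun x : R => r i j * x)) (P r))
  (eta : nat -> R)
  (eta_pos : forall l, (1 <= l <= m + n - 1)%N -> 0 < eta l)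
  (eta_lt : forall l, (1 <= l <= m + n - 1)%N ->
      ((eta l)%:E < crit_exp c (fun r => P r) l)%E) :
  let etamin := \big[Num.min/weight a b 1 * eta 1]_(1 <= l < m + n)
                    (weight a b l * eta l) in
  exists C : R, 0 < C /\
    forall l : nat, (1 <= l <= m + n - 1)%N ->
    forall r : 'M[R]_(m, n), Xi c r ->
    forall t : R, 1 < t ->
    forall v : Vl R (m + n) l, decomposable v -> vnonzero v ->
      (\int[P r]_(x in setT) negpow (vnorm (ext_act (gt a b t *m uu x) v)) (eta l)
         <= (C * t `^ (- etamin) * vnorm v `^ (- eta l))%:E)%E.
Proof.
move=> etamin.
have claim : forall l : nat, exists C : R, 0 < C /\ ((1 <= l <= m + n - 1)%N ->
   forall r, Xi c r -> forall t, 1 < t -> forall v : Vl R (m + n) l,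
   decomposable v -> vnonzero v ->
   (\int[P r]_(x in setT) negpow (vnorm (ext_act (gt a b t *m uu x) v)) (eta l)
     <= (C * t `^ (- (weight a b l * eta l)) * vnorm v `^ (- eta l))%:E)%E).
  move=> l; have [hl|hl] := boolP (1 <= l <= m + n - 1)%N; last first.
    by exists 1; split => // /(negP hl).
  have l1 : (1 <= l)%N by case/andP: hl.
  have lmn : (l <= m + n - 1)%N by case/andP: hl.
  have := eta_lt l hl; rewrite /crit_exp => /ereal_sup_gt [_ [g [g0 [C [C0 HC]]] <-]].
  rewrite lte_fin => etag.
  have e0 := eta_pos l hl.
  exists (1 + C); split; first by rewrite addr_gt0.
  move=> _ r hr t t1 v dv [s0 [s0i s0n]].
  set nu := vnorm v.
  have nu0 : 0 < nu.
    have h1 := le_vnorm v s0i. have h2 : 0 < `|v s0| by rewrite normr_gt0.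
    exact: lt_le_trans h2 h1.
  have nu0' : 0 <= nu := ltW nu0.
  pose u := fun s => v s * nu^-1.
  have du : decomposable u := decomp_scale _ l1 dv.
  have nu1 : vnorm u = 1.
    apply/eqP; rewrite eq_le; apply/andP; split.
      apply: vnorm_le => // s1 hs; rewrite /u normrM normfV (ger0_norm nu0').
      by rewrite ler_pdivrMr // mul1r; exact: le_vnorm.
    have : nu <= nu * vnorm u.
      apply: vnorm_le; first by rewrite mulr_ge0 ?vnorm_ge0 // ltW.
      move=> s1 hs; have := le_vnorm u hs.
      by rewrite /u normrM normfV (ger0_norm nu0') ler_pdivrMr // mulrC.
    by rewrite -{1}(mulr1 nu) ler_pM2l.
  have HCu := HC r hr u du nu1.
  have t0 : 0 < t by apply: lt_trans t1.
  pose lam := t `^ (weight a b l).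
  have lam0 : 0 < lam by apply: powR_gt0.
  have lam0' : 0 <= lam := ltW lam0.
  pose k := (lam * nu) `^ (- eta l).
  have k0 : 0 < k by apply: powR_gt0; rewrite mulr_gt0.
  have FG : forall x : MatM R m n,
      (negpow (vnorm (ext_act (gt a b t *m uu x) v)) (eta l) <=
       k%:E * (1 + negpow (vnorm (proj_plus (ext_act (uu x) u))) g))%E.
    move=> x; apply: negpow_bound; rewrite ?mulr_gt0 ?vnorm_ge0 //; last exact: ltW.
    rewrite mulrC -ler_pdivlMr ?mulr_gt0 //.
    apply: vnorm_le; first by rewrite divr_ge0 ?vnorm_ge0 // mulr_ge0.
    move=> s1 hs; rewrite /proj_plus; case: ifP => hc; last first.
      by rewrite normr0 divr_ge0 ?vnorm_ge0 // mulr_ge0.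
    rewrite ext_act_scale normrM normfV (ger0_norm nu0') invfM mulrA.
    rewrite ler_pM2r ?invr_gt0 // ler_pdivlMr // mulrC.
    apply: le_trans (le_vnorm _ hs).
    rewrite /gt ext_act_diag normrM ler_wpM2r //.
    under eq_bigr => i _ do rewrite gt_row.
    rewrite powR_sum // ger0_norm ?powR_ge0 //.
    apply: ler_powR; first exact: ltW.
    by apply: (comb a_dec b_dec a_sum l1 lmn hs); rewrite -card_bridge.
  have H := (int_key (P r) k0 (fun x => negpow_ge0 _ _) (fun x => negpow_ge0 _ _) FG).
  apply: (le_trans H).
  apply: (@le_trans _ _ (k%:E * (1 + C%:E))%E).
    rewrite lee_pmul2l ?lte_fin // leeD2l //; exact: ltW.
  rewrite -EFinD -EFinM lee_fin /k (powRM _ (ltW lam0) nu0') /lam -powRrM.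
  by rewrite mulrN mulrC mulrA.
have [Cf HCf] := choice claim.
exists (1 + \sum_(l < m + n) Cf l).
have Cf0 l : 0 < Cf l by case: (HCf l).
split.
  apply: (@lt_le_trans _ _ 1) => //; rewrite lerDl; apply: sumr_ge0 => i _; exact: ltW.
move=> l hl r hr t t1 v dv vn.
have t0 : 0 < t by apply: lt_trans t1.
apply: (le_trans ((HCf l).2 hl r hr t t1 v dv vn)); rewrite lee_fin.
rewrite -!mulrA; apply: ler_pM; rewrite ?mulr_ge0 ?powR_ge0 //; first exact: ltW.
  have lmn : (l < m + n)%N by case/andP: hl => _; lia.
  rewrite (bigD1 (Ordinal lmn)) //= addrCA lerDl addr_ge0 //.
  by apply: sumr_ge0 => i _; exact: ltW.
apply: ler_pM; rewrite ?powR_ge0 //.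
apply: ler_powR; first exact: ltW.
rewrite lerN2 /etamin.
apply: ge_bigmin_seq => //; rewrite mem_index_iota; lia.
Qed.
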